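(* Let $(V,\langle\cdot,\cdot\rangle)$ be a pseudo-Euclidean real vector space of signature $(k,l)$ with $k\ge2$, $l\ge2$, let $Z\subseteq V$ be a subspace with $q^+(Z)\ge1$, and let $H\subseteq V$ be a positive $(k-1)$-plane. Then $H^\perp$ is a Minkowski space of signature $(1,l)$; let $C^+(H^\perp)$ be either one of the two connected components of $\{w\in H^\perp:\langle w,w\rangle\ge0\}\setminus\{0\}$. The following are equivalent: (i) $H$ is $Z$-extendable; (ii) $q^+(H+Z)=k$; (iii) $q^+((H+Z)\cap H^\perp)\ge1$; (iv) there exists $z\in Z$ with $\langle z,u\rangle>0$ for all $u\in C^+(H^\perp)$; (v) $Z^\perp\cap C^+(H^\perp)=\emptyset$.
   Context: A pseudo-Euclidean space of signature $(k,l)$ is a finite-dimensional real vector space with a symmetric non-degenerate bilinear form whose Sylvester diagonal form has $k$ entries $+1$ and $l$ entries $-1$. For a subspace $L$, $q^+(L)$ denotes the number of $+1$'s in a diagonalization of the restriction of the form to $L$, and $L^\perp$ is the orthogonal complement in $V$. A positive $r$-plane is an $r$-dimensional subspace on which the form is positive definite. $H$ is $Z$-extendable if there is $z\in Z$ with $H+\mathbb{R}z$ a positive $k$-plane. *)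

(* Defs.v *)
From Stdlib Require Import Reals.
Open Scope R_scope.

(* Vectors of V = R^n are represented as functions nat -> R that vanish
   from index n on. *)
Definition Vec := nat -> R.
Definition vec (n : nat) (v : Vec) : Prop := forall i, (n <= i)%nat -> v i = 0.

Fixpoint fsum (m : nat) (f : nat -> R) : R :=
  match m with O => 0 | S p => fsum p f + f p end.

Definition bform (n : nat) (G : nat -> nat -> R) (v w : Vec) : R :=
  fsum n (fun i => fsum n (fun j => G i j * v i * w j)).

Definition symmetric (n : nat) (G : nat -> nat -> R) : Prop :=
  forall i j, (i < n)%nat -> (j < n)%nat -> G i j = G j i.

Definition nonzero (v : Vec) : Prop := exists i, v i <> 0.

Definition nondegenerate (n : nat) (G : nat -> nat -> R) : Prop :=
  forall v, vec n v -> (forall w, vec n w -> bform n G v w = 0) -> ~ nonzero v.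

Definition subspace (n : nat) (L : Vec -> Prop) : Prop :=
  (forall v, L v -> vec n v) /\ L (fun _ => 0) /\
  (forall v w, L v -> L w -> L (fun i => v i + w i)) /\
  (forall t v, L v -> L (fun i => t * v i)).

Definition lincomb (m : nat) (c : nat -> R) (b : nat -> Vec) : Vec :=
  fun i => fsum m (fun j => c j * b j i).

Definition basis (L : Vec -> Prop) (m : nat) (b : nat -> Vec) : Prop :=
  (forall j, (j < m)%nat -> L (b j)) /\
  (forall v, L v -> exists c, forall i, v i = lincomb m c b i) /\
  (forall c, (forall i, lincomb m c b i = 0) -> forall j, (j < m)%nat -> c j = 0).

Definition obasis n G (L : Vec -> Prop) (m : nat) (b : nat -> Vec) : Prop :=
  basis L m b /\
  (forall i j, (i < m)%nat -> (j < m)%nat -> i <> j -> bform n G (b i) (b j) = 0).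

Fixpoint npos n G (m : nat) (b : nat -> Vec) : nat :=
  match m with
  | O => O
  | S p => (npos n G p b +
            (if Rlt_dec 0 (bform n G (b p) (b p)) then 1 else 0))%nat
  end.

Fixpoint nneg n G (m : nat) (b : nat -> Vec) : nat :=
  match m with
  | O => O
  | S p => (nneg n G p b +
            (if Rlt_dec (bform n G (b p) (b p)) 0 then 1 else 0))%nat
  end.

(* q^+(L) = p : the number of positive entries of a diagonalization of the
   restriction of the form to L is p (well defined by Sylvester's law). *)
Definition qplus n G (L : Vec -> Prop) (p : nat) : Prop :=
  exists m b, obasis n G L m b /\ npos n G m b = p.

Definition signature n G (L : Vec -> Prop) (p q : nat) : Prop :=
  exists m b, obasis n G L m b /\ npos n G m b = p /\ nneg n G m b = q /\
    (forall j, (j < m)%nat -> bform n G (b j) (b j) <> 0).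

Definition whole (n : nat) : Vec -> Prop := vec n.

Definition pseudo_euclidean n G (k l : nat) : Prop :=
  symmetric n G /\ nondegenerate n G /\ signature n G (whole n) k l.

Definition ssum (L1 L2 : Vec -> Prop) : Vec -> Prop :=
  fun v => exists a b, L1 a /\ L2 b /\ forall i, v i = a i + b i.

Definition sinter (L1 L2 : Vec -> Prop) : Vec -> Prop := fun v => L1 v /\ L2 v.

Definition line (z : Vec) : Vec -> Prop := fun v => exists t, forall i, v i = t * z i.

Definition orth n G (L : Vec -> Prop) : Vec -> Prop :=
  fun w => vec n w /\ forall v, L v -> bform n G w v = 0.

Definition pos_plane n G (L : Vec -> Prop) (r : nat) : Prop :=
  subspace n L /\ (exists b, basis L r b) /\
  (forall v, L v -> nonzero v -> bform n G v v > 0).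

Definition extendable n G (k : nat) (Z H : Vec -> Prop) : Prop :=
  exists z, Z z /\ pos_plane n G (ssum H (line z)) k.

Definition open_set (n : nat) (U : Vec -> Prop) : Prop :=
  forall v, U v -> exists eps, eps > 0 /\
    forall w, vec n w -> (forall i, (i < n)%nat -> Rabs (w i - v i) < eps) -> U w.

Definition connected (n : nat) (A : Vec -> Prop) : Prop :=
  ~ exists U1 U2, open_set n U1 /\ open_set n U2 /\
      (forall a, A a -> U1 a \/ U2 a) /\
      (exists a, A a /\ U1 a) /\ (exists a, A a /\ U2 a) /\
      (forall a, A a -> U1 a -> U2 a -> False).

Definition connected_component (n : nat) (C A : Vec -> Prop) : Prop :=
  (forall x, C x -> A x) /\ (exists x, C x) /\ connected n C /\
  (forall D, (forall x, D x -> A x) -> connected n D ->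
     (exists x, D x /\ C x) -> forall x, D x -> C x).

Definition causal_cone n G (L : Vec -> Prop) : Vec -> Prop :=
  fun w => L w /\ bform n G w w >= 0 /\ nonzero w.

(* Main.v *)
Require Import Defs.
From Stdlib Require Import Reals Lra Lia Psatz Arith Classical FunctionalExtensionality Wf_nat.
Import Defs.
Open Scope R_scope.

Lemma fsum_S m f : fsum (S m) f = fsum m f + f m.
Proof. reflexivity. Qed.

Lemma fsum_ext m f g : (forall i, (i < m)%nat -> f i = g i) -> fsum m f = fsum m g.
Proof. induction m; simpl; intros H; [reflexivity|]. rewrite IHm by (intros; apply H; lia). rewrite H by lia. reflexivity. Qed.

Lemma fsum_plus m f g : fsum m (fun i => f i + g i) = fsum m f + fsum m g.
Proof. induction m; simpl; [lra|]. rewrite IHm; lra. Qed.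

Lemma fsum_scal m a f : fsum m (fun i => a * f i) = a * fsum m f.
Proof. induction m; simpl; [lra|]. rewrite IHm; lra. Qed.

Lemma fsum_lin2 m a b f g : fsum m (fun i => a * f i + b * g i) = a * fsum m f + b * fsum m g.
Proof. rewrite fsum_plus, fsum_scal, fsum_scal. reflexivity. Qed.

Lemma fsum_zero m f : (forall i, (i<m)%nat -> f i = 0) -> fsum m f = 0.
Proof. induction m; simpl; intros H; [lra|]. rewrite IHm by (intros; apply H; lia). rewrite H by lia. lra. Qed.

Lemma fsum_single m f j : (j < m)%nat -> (forall i, (i<m)%nat -> i <> j -> f i = 0) -> fsum m f = f j.
Proof.
  induction m; intros Hj H; [lia|]. simpl.
  destruct (Nat.eq_dec j m) as [->|Hne].
  - rewrite fsum_zero; [lra|]. intros; apply H; lia.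
  - rewrite IHm by (try lia; intros; apply H; lia). rewrite (H m) by lia. lra.
Qed.

Lemma fsum_swap m r F : fsum m (fun i => fsum r (fun j => F i j)) = fsum r (fun j => fsum m (fun i => F i j)).
Proof.
  induction m; simpl.
  - symmetry; apply fsum_zero; reflexivity.
  - rewrite IHm, <- fsum_plus. reflexivity.
Qed.

Lemma fsum_app m r F : fsum (m + r) F = fsum m F + fsum r (fun j => F (m + j)%nat).
Proof.
  induction r; simpl.
  - rewrite Nat.add_0_r; lra.
  - rewrite Nat.add_succ_r; simpl. rewrite IHr; lra.
Qed.

Lemma fsum_nonneg m f : (forall i, (i<m)%nat -> 0 <= f i) -> 0 <= fsum m f.
Proof. induction m; simpl; intros H; [lra|]. pose proof (H m ltac:(lia)). pose proof (IHm ltac:(intros; apply H; lia)). lra. Qed.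

Lemma fsum_nonpos m f : (forall i, (i<m)%nat -> f i <= 0) -> fsum m f <= 0.
Proof. induction m; simpl; intros H; [lra|]. pose proof (H m ltac:(lia)). pose proof (IHm ltac:(intros; apply H; lia)). lra. Qed.

Lemma fsum_pos m f j : (j < m)%nat -> (forall i, (i<m)%nat -> 0 <= f i) -> 0 < f j -> 0 < fsum m f.
Proof.
  induction m; intros Hj H Hp; [lia|]. simpl.
  destruct (Nat.eq_dec j m) as [->|Hne].
  - pose proof (fsum_nonneg m f ltac:(intros; apply H; lia)). lra.
  - pose proof (IHm ltac:(lia) ltac:(intros; apply H; lia) Hp). pose proof (H m ltac:(lia)). lra.
Qed.

Lemma fsum_le m f g : (forall i, (i<m)%nat -> f i <= g i) -> fsum m f <= fsum m g.
Proof. induction m; simpl; intros H; [lra|]. pose proof (H m ltac:(lia)). pose proof (IHm ltac:(intros; apply H; lia)). lra. Qed.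

Lemma fsum_abs m f : Rabs (fsum m f) <= fsum m (fun i => Rabs (f i)).
Proof. induction m; simpl. rewrite Rabs_R0; lra. eapply Rle_trans; [apply Rabs_triang|]. lra. Qed.

Fixpoint cnt (Q : nat -> bool) (r : nat) : nat :=
  match r with O => O | S p => (cnt Q p + (if Q p then 1 else 0))%nat end.

Lemma cnt_ext Q Q' r : (forall i, (i<r)%nat -> Q i = Q' i) -> cnt Q r = cnt Q' r.
Proof. induction r; simpl; intros H; auto. rewrite IHr by (intros; apply H; lia). rewrite H by lia. reflexivity. Qed.

Lemma cnt_app Q r s : cnt Q (r + s) = (cnt Q r + cnt (fun i => Q (r + i)%nat) s)%nat.
Proof. induction s; simpl. rewrite Nat.add_0_r; lia. rewrite Nat.add_succ_r; simpl. rewrite IHs; lia. Qed.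

Lemma cnt_compl Q r : (cnt Q r + cnt (fun i => negb (Q i)) r)%nat = r.
Proof. induction r; simpl; auto. destruct (Q r); simpl; lia. Qed.

Lemma cnt_true r : cnt (fun _ => true) r = r.
Proof. induction r; simpl; lia. Qed.

Lemma cnt_le Q r : (cnt Q r <= r)%nat.
Proof. induction r; simpl; auto. destruct (Q r); lia. Qed.

Lemma fin_choice {A} (x0 : A) (P : nat -> A -> Prop) m :
  (forall j, (j < m)%nat -> exists x, P j x) -> exists f : nat -> A, forall j, (j < m)%nat -> P j (f j).
Proof.
  induction m; intros H.
  - exists (fun _ => x0); intros; lia.
  - destruct IHm as [f Hf]; [intros; apply H; lia|].
    destruct (H m ltac:(lia)) as [x Hx].
    exists (fun j => if Nat.eqb j m then x else f j).
    intros j Hj. destruct (Nat.eqb_spec j m); subst; auto. apply Hf; lia.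
Qed.

Lemma L0 : forall r m (a : nat -> nat -> R) (Q : nat -> bool), (cnt Q r < m)%nat ->
  exists c, (exists j, (j<m)%nat /\ c j <> 0) /\
    forall i, (i < r)%nat -> Q i = true -> fsum m (fun j => c j * a j i) = 0.
Proof.
  induction r; intros m a Q Hc.
  - exists (fun _ => 1). split. exists 0%nat; split; [simpl in Hc; lia|lra]. intros; lia.
  - simpl in Hc. destruct (Q r) eqn:EQ.
    + destruct m as [|p]; [lia|].
      assert (Piv : forall a : nat -> nat -> R, a p r <> 0 -> exists c, (exists j, (j<S p)%nat /\ c j <> 0) /\
        forall i, (i < S r)%nat -> Q i = true -> fsum (S p) (fun j => c j * a j i) = 0).
      { intros b Hb.
        destruct (IHr p (fun j i => b j i - b j r * b p i / b p r) Q ltac:(lia)) as [c' [[j1 [Hj1 Hc1]] Hs]].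
        set (S0 := fsum p (fun j => c' j * b j r)).
        exists (fun j => if Nat.ltb j p then c' j else - S0 / b p r). split.
        - exists j1. split; [lia|]. destruct (Nat.ltb_spec j1 p); [auto|lia].
        - intros i Hi HQ. rewrite fsum_S.
          rewrite (fsum_ext p _ (fun j => c' j * b j i)) by (intros j Hj; destruct (Nat.ltb_spec j p); [auto|lia]).
          destruct (Nat.ltb_spec p p); [lia|].
          destruct (Nat.eq_dec i r) as [->|Hne].
          + unfold S0. field. auto.
          + specialize (Hs i ltac:(lia) HQ).
            rewrite (fsum_ext p _ (fun j => 1 * (c' j * b j i) + (- (b p i / b p r)) * (c' j * b j r))) in Hs
              by (intros; field; auto).
            rewrite fsum_lin2 in Hs. fold S0 in Hs. field_simplify; [|auto].
            apply Rmult_eq_reg_r with (/ b p r); [|apply Rinv_neq_0_compat; auto].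
            rewrite Rmult_0_l. field_simplify; [|auto]. 
            replace (fsum p (fun j => c' j * b j i)) with (b p i / b p r * S0) by lra.
            field. auto. }
      destruct (classic (forall j, (j < S p)%nat -> a j r = 0)) as [Hall|Hex].
      * destruct (IHr (S p) a Q ltac:(lia)) as [c [Hnz Hs]]. exists c; split; auto.
        intros i Hi HQ. destruct (Nat.eq_dec i r) as [->|Hne].
        -- apply fsum_zero. intros j Hj. rewrite Hall by auto. ring.
        -- apply Hs; auto; lia.
      * apply not_all_ex_not in Hex. destruct Hex as [j0 Hj0].
        apply imply_to_and in Hj0. destruct Hj0 as [Hj0 Hnz0].
        destruct (Req_dec (a p r) 0) as [Hp0|Hp0]; [|apply Piv; auto].
        assert (Hj0p : (j0 < p)%nat) by (destruct (Nat.eq_dec j0 p); [subst; contradiction|lia]).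
        set (b := fun j i => if Nat.eqb j p then a p i + a j0 i else a j i).
        destruct (Piv b) as [cs [[j1 [Hj1 Hcs1]] Hs]].
        { unfold b. rewrite Nat.eqb_refl. lra. }
        exists (fun j => cs j + (if Nat.eqb j j0 then cs p else 0)). split.
        -- apply NNPP; intro Hno.
           assert (Hz : forall j, (j < S p)%nat -> cs j + (if Nat.eqb j j0 then cs p else 0) = 0).
           { intros j Hj. apply NNPP; intro; apply Hno; exists j; split; auto. }
           assert (Hp : cs p = 0).
           { specialize (Hz p ltac:(lia)). destruct (Nat.eqb_spec p j0); [lia|lra]. }
           apply Hcs1. specialize (Hz j1 Hj1). destruct (Nat.eqb_spec j1 j0); lra.
        -- intros i Hi HQ. specialize (Hs i Hi HQ). transitivity (fsum (S p) (fun j => cs j * b j i)); [|exact Hs].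
           rewrite !fsum_S. unfold b at 2. rewrite Nat.eqb_refl.
           destruct (Nat.eqb_spec p j0); [lia|].
           rewrite (fsum_ext p (fun j => cs j * b j i) (fun j => cs j * a j i))
             by (intros j Hj; unfold b; destruct (Nat.eqb_spec j p); [lia|auto]).
           rewrite (fsum_ext p (fun j => (cs j + (if Nat.eqb j j0 then cs p else 0)) * a j i) (fun j => 1 * (cs j * a j i) + cs p * (if Nat.eqb j j0 then a j i else 0)))
             by (intros j Hj; destruct (Nat.eqb_spec j j0); ring).
           rewrite fsum_lin2.
           rewrite (fsum_single p (fun j => if Nat.eqb j j0 then a j i else 0) j0) by (first [lia | intros j Hj Hne; destruct (Nat.eqb_spec j j0); [lia|auto]]).
           rewrite Nat.eqb_refl. ring.
    + destruct (IHr m a Q ltac:(lia)) as [c [Hnz Hs]]. exists c; split; auto.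
      intros i Hi HQ. destruct (Nat.eq_dec i r) as [->|Hne]; [congruence|]. apply Hs; auto; lia.
Qed.

Section Form.
Variable n : nat.
Variable G : nat -> nat -> R.
Notation B := (bform n G).

Lemma bform_addl v v' w : B (fun i => v i + v' i) w = B v w + B v' w.
Proof. unfold bform. rewrite <- fsum_plus. apply fsum_ext; intros. rewrite <- fsum_plus. apply fsum_ext; intros. ring. Qed.
Lemma bform_addr v w w' : B v (fun i => w i + w' i) = B v w + B v w'.
Proof. unfold bform. rewrite <- fsum_plus. apply fsum_ext; intros. rewrite <- fsum_plus. apply fsum_ext; intros. ring. Qed.
Lemma bform_scall a v w : B (fun i => a * v i) w = a * B v w.
Proof. unfold bform. rewrite <- fsum_scal. apply fsum_ext; intros. rewrite <- fsum_scal. apply fsum_ext; intros. ring. Qed.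
Lemma bform_scalr a v w : B v (fun i => a * w i) = a * B v w.
Proof. unfold bform. rewrite <- fsum_scal. apply fsum_ext; intros. rewrite <- fsum_scal. apply fsum_ext; intros. ring. Qed.
Lemma bform_zerol w : B (fun _ => 0) w = 0.
Proof. unfold bform. apply fsum_zero; intros. apply fsum_zero; intros. ring. Qed.
Lemma bform_zeror w : B w (fun _ => 0) = 0.
Proof. unfold bform. apply fsum_zero; intros. apply fsum_zero; intros. ring. Qed.
Lemma bform_subl v v' w : B (fun i => v i - v' i) w = B v w - B v' w.
Proof.
  replace (fun i => v i - v' i) with (fun i => v i + (-1) * v' i) by (apply functional_extensionality; intros; ring).
  rewrite bform_addl, bform_scall. ring.
Qed.
Lemma bform_subr v w w' : B v (fun i => w i - w' i) = B v w - B v w'.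
Proof.
  replace (fun i => w i - w' i) with (fun i => w i + (-1) * w' i) by (apply functional_extensionality; intros; ring).
  rewrite bform_addr, bform_scalr. ring.
Qed.
Lemma bform_oppl v w : B (fun i => - v i) w = - B v w.
Proof.
  replace (fun i => - v i) with (fun i => (-1) * v i) by (apply functional_extensionality; intros; ring).
  rewrite bform_scall. ring.
Qed.
Lemma bform_oppr v w : B v (fun i => - w i) = - B v w.
Proof.
  replace (fun i => - w i) with (fun i => (-1) * w i) by (apply functional_extensionality; intros; ring).
  rewrite bform_scalr. ring.
Qed.

Lemma bform_sym v w : symmetric n G -> B v w = B w v.
Proof.
  intros HS. unfold bform. rewrite fsum_swap. apply fsum_ext; intros i Hi. apply fsum_ext; intros j Hj.
  rewrite HS by auto. ring.
Qed.

Lemma lincomb_S m c f : lincomb (S m) c f = fun i => lincomb m c f i + c m * f m i.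
Proof. reflexivity. Qed.
Lemma lincomb_0 c f : lincomb 0 c f = fun _ => 0.
Proof. reflexivity. Qed.

Lemma bform_lcl m c f w : B (lincomb m c f) w = fsum m (fun j => c j * B (f j) w).
Proof.
  induction m. rewrite lincomb_0, bform_zerol. reflexivity.
  rewrite lincomb_S, bform_addl, IHm, (bform_scall (c m) (f m)). reflexivity.
Qed.
Lemma bform_lcr m c f w : B w (lincomb m c f) = fsum m (fun j => c j * B w (f j)).
Proof.
  induction m. rewrite lincomb_0, bform_zeror. reflexivity.
  rewrite lincomb_S, bform_addr, IHm, (bform_scalr (c m) w (f m)). reflexivity.
Qed.

Definition orthf m (u : nat -> Vec) := forall i j, (i<m)%nat -> (j<m)%nat -> i <> j -> B (u i) (u j) = 0.
Definition indep m (f : nat -> Vec) := forall c, (forall i, lincomb m c f i = 0) -> forall j, (j<m)%nat -> c j = 0.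

Lemma coord_l m x u i : orthf m u -> (i<m)%nat -> B (lincomb m x u) (u i) = x i * B (u i) (u i).
Proof.
  intros Ho Hi. rewrite bform_lcl. rewrite (fsum_single m _ i Hi); auto.
  intros j Hj Hne. rewrite Ho by auto. ring.
Qed.
Lemma coord_r m x u i : orthf m u -> (i<m)%nat -> B (u i) (lincomb m x u) = x i * B (u i) (u i).
Proof.
  intros Ho Hi. rewrite bform_lcr. rewrite (fsum_single m _ i Hi); auto.
  intros j Hj Hne. rewrite Ho by auto. ring.
Qed.
Lemma expand m x u : orthf m u -> B (lincomb m x u) (lincomb m x u) = fsum m (fun i => x i * x i * B (u i) (u i)).
Proof.
  intros Ho. rewrite bform_lcl. apply fsum_ext; intros i Hi. rewrite coord_r by auto. ring.
Qed.

Lemma lincomb_ind m f j : (j<m)%nat -> lincomb m (fun i => if Nat.eqb i j then 1 else 0) f = f j.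
Proof.
  intros Hj. apply functional_extensionality; intros x. unfold lincomb.
  rewrite (fsum_single m _ j Hj). rewrite Nat.eqb_refl; ring.
  intros i Hi Hne. destruct (Nat.eqb_spec i j); [lia|ring].
Qed.

Lemma zero_not_nonzero v : (forall i, v i = 0) -> ~ nonzero v.
Proof. intros H [i Hi]. apply Hi, H. Qed.

Lemma indep_nonzero m f j : indep m f -> (j<m)%nat -> nonzero (f j).
Proof.
  intros Hi Hj. apply NNPP; intros Hn.
  assert (Hz : forall i, f j i = 0) by (intros i; apply NNPP; intro; apply Hn; exists i; auto).
  specialize (Hi (fun i => if Nat.eqb i j then 1 else 0)). 
  assert (H1 : (if Nat.eqb j j then 1 else 0) = 0). { apply Hi; auto. intros i. rewrite lincomb_ind; auto. }
  rewrite Nat.eqb_refl in H1. lra.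
Qed.

Lemma nonzero_of_form v : B v v <> 0 -> nonzero v.
Proof.
  intros H. apply NNPP; intros Hn. apply H.
  replace v with (fun _ : nat => 0). apply bform_zerol.
  apply functional_extensionality; intros i. apply NNPP; intro Hx. apply Hn. exists i; auto.
Qed.

Lemma lincomb_in L m c f : subspace n L -> (forall j, (j<m)%nat -> L (f j)) -> L (lincomb m c f).
Proof.
  intros [_ [H0 [Ha Hs]]] Hf. induction m.
  - rewrite lincomb_0; auto.
  - rewrite lincomb_S. apply Ha. apply IHm; intros; apply Hf; lia. apply Hs, Hf; lia.
Qed.

Lemma subspace_whole : subspace n (whole n).
Proof.
  unfold whole, vec. repeat split; intros; auto.
  rewrite H, H0 by auto; ring. rewrite H by auto; ring.
Qed.

Lemma vec_lincomb m c f : (forall j, (j<m)%nat -> vec n (f j)) -> vec n (lincomb m c f).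
Proof. intros. apply (lincomb_in (whole n)); auto. apply subspace_whole. Qed.

Lemma indep_le m r f g : (forall j, (j<m)%nat -> exists x, f j = lincomb r x g) -> indep m f -> (m <= r)%nat.
Proof.
  intros Hs Hi. destruct (le_lt_dec m r) as [|Hlt]; auto. exfalso.
  destruct (fin_choice (fun _ => 0) (fun j x => f j = lincomb r x g) m Hs) as [A HA].
  destruct (L0 r m (fun j i => A j i) (fun _ => true)) as [c [[j [Hj Hc]] Heq]].
  { rewrite cnt_true; auto. }
  apply Hc. apply Hi; auto. intros i. unfold lincomb.
  rewrite (fsum_ext m _ (fun j => fsum r (fun t => c j * A j t * g t i))).
  2:{ intros j' Hj'. rewrite HA by auto. unfold lincomb. rewrite <- fsum_scal. apply fsum_ext; intros; ring. }
  rewrite fsum_swap. apply fsum_zero. intros t Ht.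
  rewrite (fsum_ext m _ (fun j => g t i * (c j * A j t))) by (intros; ring).
  rewrite fsum_scal. rewrite Heq by auto. ring.
Qed.

Lemma orth_indep m u : orthf m u -> (forall j, (j<m)%nat -> B (u j) (u j) <> 0) -> indep m u.
Proof.
  intros Ho Hd c Hc j Hj.
  assert (Hz : lincomb m c u = fun _ => 0) by (apply functional_extensionality; auto).
  pose proof (coord_l m c u j Ho Hj) as E. rewrite Hz, bform_zerol in E.
  specialize (Hd j Hj). symmetry in E. apply Rmult_integral in E as [|]; [auto|contradiction].
Qed.

Definition posb x := if Rlt_dec 0 x then true else false.

Lemma npos_cnt m b : npos n G m b = cnt (fun j => posb (B (b j) (b j))) m.
Proof. induction m; simpl; auto. rewrite IHm. unfold posb. destruct Rlt_dec; reflexivity. Qed.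

End Form.

Section K.
Variable n : nat.
Variable G : nat -> nat -> R.
Notation B := (bform n G).

Lemma posb_true x : posb x = true <-> 0 < x.
Proof. unfold posb; destruct Rlt_dec; split; intros; auto; try discriminate; lra. Qed.

Lemma K0 s u r g Q : orthf n G s u -> (cnt Q r < npos n G s u)%nat ->
  exists c, B (lincomb s c u) (lincomb s c u) > 0 /\
    forall i, (i<r)%nat -> Q i = true -> B (lincomb s c u) (g i) = 0.
Proof.
  intros Ho Hc. rewrite npos_cnt in Hc.
  set (P := fun j => posb (B (u j) (u j))) in *.
  set (a := fun j i => if Nat.ltb i r then B (u j) (g i) else (if Nat.eqb j (i - r) then 1 else 0)).
  set (Q' := fun i => if Nat.ltb i r then Q i else negb (P (i - r)%nat)).
  destruct (L0 (r + s) s a Q') as [c [[j1 [Hj1 Hc1]] Heq]].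
  { rewrite cnt_app. rewrite (cnt_ext Q' Q r) by (intros i Hi; unfold Q'; destruct (Nat.ltb_spec i r); [auto|lia]).
    rewrite (cnt_ext _ (fun i => negb (P i)) s).
    2:{ intros i Hi; unfold Q'. destruct (Nat.ltb_spec (r+i) r); [lia|]. f_equal. f_equal. lia. }
    pose proof (cnt_compl P s). lia. }
  assert (Hz : forall i, (i<s)%nat -> P i = false -> c i = 0).
  { intros i Hi HP. specialize (Heq (r+i)%nat ltac:(lia)).
    unfold Q' in Heq. destruct (Nat.ltb_spec (r+i) r); [lia|].
    replace (r + i - r)%nat with i in Heq by lia. rewrite HP in Heq. specialize (Heq eq_refl).
    rewrite (fsum_single s _ i Hi) in Heq.
    - unfold a in Heq. destruct (Nat.ltb_spec (r+i) r); [lia|]. replace (r+i-r)%nat with i in Heq by lia.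
      rewrite Nat.eqb_refl in Heq. lra.
    - intros j Hj Hne. unfold a. destruct (Nat.ltb_spec (r+i) r); [lia|]. replace (r+i-r)%nat with i by lia.
      destruct (Nat.eqb_spec j i); [lia|ring]. }
  exists c. split.
  - rewrite expand by auto. apply Rlt_gt. apply (fsum_pos s _ j1 Hj1).
    + intros i Hi. destruct (P i) eqn:EP.
      * apply posb_true in EP. pose proof (Rle_0_sqr (c i)). unfold Rsqr in *. nra.
      * rewrite Hz by auto. lra.
    + destruct (P j1) eqn:EP.
      * apply posb_true in EP. pose proof (Rsqr_pos_lt (c j1) Hc1). unfold Rsqr in *. nra.
      * exfalso. apply Hc1. auto.
  - intros i Hi HQ. rewrite bform_lcl. rewrite <- (Heq i) by (first [lia | unfold Q'; destruct (Nat.ltb_spec i r); [auto|lia]]).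
    apply fsum_ext; intros j Hj. unfold a. destruct (Nat.ltb_spec i r); [auto|lia].
Qed.

Definition obasisF L m b := obasis n G L m b.

Lemma basis_indep L m b : basis L m b -> indep m b.
Proof. intros [_ [_ H]]. exact H. Qed.

Lemma basis_span L m b v : basis L m b -> L v -> exists x, v = lincomb m x b.
Proof.
  intros [_ [H _]] Hv. destruct (H v Hv) as [x Hx]. exists x. apply functional_extensionality; auto.
Qed.

Lemma K1 L m b s u : subspace n L -> obasis n G L m b -> orthf n G s u -> (forall j, (j<s)%nat -> L (u j)) ->
  (npos n G s u <= npos n G m b)%nat.
Proof.
  intros HL [Hb Hob] Ho Hu. destruct (le_lt_dec (npos n G s u) (npos n G m b)) as [|Hlt]; auto. exfalso.
  rewrite (npos_cnt n G m b) in Hlt.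
  destruct (K0 s u m b _ Ho Hlt) as [c [Hp Hz]].
  set (v := lincomb s c u) in *.
  assert (Hv : L v) by (apply (lincomb_in n); auto).
  destruct (basis_span L m b v Hb Hv) as [x Hx].
  assert (Hx0 : forall i, (i<m)%nat -> 0 < B (b i) (b i) -> x i = 0).
  { intros i Hi Hpi. specialize (Hz i Hi (proj2 (posb_true _) Hpi)). rewrite Hx, coord_l in Hz by auto.
    apply Rmult_integral in Hz as [|]; [auto|lra]. }
  rewrite Hx, expand in Hp by auto.
  assert (fsum m (fun i => x i * x i * B (b i) (b i)) <= 0); [|lra].
  apply fsum_nonpos. intros i Hi. destruct (Rlt_dec 0 (B (b i) (b i))).
  - rewrite Hx0 by auto. lra.
  - pose proof (Rle_0_sqr (x i)). unfold Rsqr in *. nra.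
Qed.

End K.

Section D.
Variable n : nat.
Variable G : nat -> nat -> R.
Notation B := (bform n G).

Definition ext m (b : nat -> Vec) (w : Vec) : nat -> Vec := fun j => if Nat.ltb j m then b j else w.

Lemma lincomb_ext m c c' f f' : (forall j, (j<m)%nat -> c j = c' j /\ f j = f' j) -> lincomb m c f = lincomb m c' f'.
Proof.
  intros H. apply functional_extensionality; intros i. unfold lincomb. apply fsum_ext; intros j Hj.
  destruct (H j Hj) as [-> ->]. reflexivity.
Qed.

Lemma lincomb_extS m c b w : lincomb (S m) c (ext m b w) = fun i => lincomb m c b i + c m * w i.
Proof.
  rewrite lincomb_S. rewrite (lincomb_ext m c c (ext m b w) b).
  - unfold ext. rewrite Nat.ltb_irrefl. reflexivity.
  - intros j Hj. unfold ext. destruct (Nat.ltb_spec j m); [auto|lia].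
Qed.

Lemma npos_ext m b b' : (forall j, (j<m)%nat -> b j = b' j) -> npos n G m b = npos n G m b'.
Proof. induction m; simpl; intros H; auto. rewrite IHm by (intros; apply H; lia). rewrite H by lia. reflexivity. Qed.
Lemma nneg_ext m b b' : (forall j, (j<m)%nat -> b j = b' j) -> nneg n G m b = nneg n G m b'.
Proof. induction m; simpl; intros H; auto. rewrite IHm by (intros; apply H; lia). rewrite H by lia. reflexivity. Qed.

Lemma npos_extS m b w : npos n G (S m) (ext m b w) = (npos n G m b + if Rlt_dec 0 (B w w) then 1 else 0)%nat.
Proof.
  simpl. rewrite (npos_ext m (ext m b w) b). unfold ext. rewrite Nat.ltb_irrefl. reflexivity.
  intros j Hj. unfold ext. destruct (Nat.ltb_spec j m); [auto|lia].
Qed.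
Lemma nneg_extS m b w : nneg n G (S m) (ext m b w) = (nneg n G m b + if Rlt_dec (B w w) 0 then 1 else 0)%nat.
Proof.
  simpl. rewrite (nneg_ext m (ext m b w) b). unfold ext. rewrite Nat.ltb_irrefl. reflexivity.
  intros j Hj. unfold ext. destruct (Nat.ltb_spec j m); [auto|lia].
Qed.

Definition stdb (j : nat) : Vec := fun i => if Nat.eqb i j then 1 else 0.

Lemma vec_std v : vec n v -> v = lincomb n (fun j => v j) stdb.
Proof.
  intros Hv. apply functional_extensionality; intros i. unfold lincomb, stdb.
  destruct (le_lt_dec n i) as [Hi|Hi].
  - rewrite Hv by auto. symmetry; apply fsum_zero; intros j Hj. destruct (Nat.eqb_spec i j); [lia|ring].
  - rewrite (fsum_single n _ i Hi). rewrite Nat.eqb_refl; ring.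
    intros j Hj Hne. destruct (Nat.eqb_spec i j); [lia|ring].
Qed.

Lemma indep_vec_le m f : (forall j, (j<m)%nat -> vec n (f j)) -> indep m f -> (m <= n)%nat.
Proof.
  intros Hv Hi. apply (indep_le m n f stdb); auto. intros j Hj. eexists. apply vec_std; auto.
Qed.

Lemma ext_indep m b w : indep m b -> (forall j, (j<m)%nat -> B (b j) w = 0) -> B w w <> 0 ->
  indep (S m) (ext m b w).
Proof.
  intros Hi Ho Hw c Hc.
  rewrite lincomb_extS in Hc.
  assert (Hz : (fun i => lincomb m c b i + c m * w i) = fun _ => 0) by (apply functional_extensionality; auto).
  assert (E : B (fun i => lincomb m c b i + c m * w i) w = 0) by (rewrite Hz; apply bform_zerol).
  rewrite bform_addl, bform_scall, bform_lcl in E.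
  rewrite fsum_zero in E by (intros j Hj; rewrite Ho by auto; ring).
  rewrite Rplus_0_l in E. assert (Hcm : c m = 0) by (apply Rmult_integral in E as [|]; [auto|contradiction]).
  intros j Hj. destruct (Nat.eq_dec j m) as [->|Hne]; auto.
  apply Hi; [|lia]. intros i. specialize (Hc i). rewrite Hcm in Hc. lra.
Qed.

Lemma basis_exists L : subspace n L -> exists m b, basis L m b.
Proof.
  intros HL.
  assert (Cl : forall d m f, (n - m = d)%nat -> (m <= n)%nat -> (forall j, (j<m)%nat -> L (f j)) -> indep m f ->
     exists m b, basis L m b).
  { induction d; intros m f Hd Hm Hf Hi.
    - destruct (classic (forall v, L v -> exists x, forall i, v i = lincomb m x f i)) as [Hs|Hs].
      + exists m, f. split; auto.
      + exfalso. apply not_all_ex_not in Hs as [v Hv]. apply imply_to_and in Hv as [Lv Hv].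
        assert (Hin : indep (S m) (ext m f v)).
        { intros c Hc j Hj. rewrite lincomb_extS in Hc.
          assert (Hcm : c m = 0).
          { apply NNPP; intro Hcm. apply Hv. exists (fun j => - c j / c m). intros i.
            specialize (Hc i). unfold lincomb in *.
            rewrite (fsum_ext m _ (fun j => (- / c m) * (c j * f j i))) by (intros; field; auto).
            rewrite fsum_scal. field_simplify; auto. apply Rmult_eq_reg_r with (c m); auto. field_simplify; auto. lra. }
          destruct (Nat.eq_dec j m) as [->|]; auto. apply Hi; [|lia]. intros i. specialize (Hc i). rewrite Hcm in Hc. lra. }
        apply indep_vec_le in Hin; [lia|]. intros j Hj. unfold ext. destruct (Nat.ltb_spec j m).
        * apply (proj1 HL), Hf; auto.
        * apply (proj1 HL); auto.
    - destruct (classic (forall v, L v -> exists x, forall i, v i = lincomb m x f i)) as [Hs|Hs].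
      + exists m, f. split; auto.
      + apply not_all_ex_not in Hs as [v Hv]. apply imply_to_and in Hv as [Lv Hv].
        apply (IHd (S m) (ext m f v)); try lia.
        * intros j Hj. unfold ext. destruct (Nat.ltb_spec j m); auto.
        * intros c Hc j Hj. rewrite lincomb_extS in Hc.
          assert (Hcm : c m = 0).
          { apply NNPP; intro Hcm. apply Hv. exists (fun j => - c j / c m). intros i.
            specialize (Hc i). unfold lincomb in *.
            rewrite (fsum_ext m _ (fun j => (- / c m) * (c j * f j i))) by (intros; field; auto).
            rewrite fsum_scal. field_simplify; auto. apply Rmult_eq_reg_r with (c m); auto. field_simplify; auto. lra. }
          destruct (Nat.eq_dec j m) as [->|]; auto. apply Hi; [|lia]. intros i. specialize (Hc i). rewrite Hcm in Hc. lra. }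
  apply (Cl (n - 0)%nat 0%nat (fun _ => fun _ => 0)); try lia.
  intros c _ j Hj; lia.
Qed.

End D.

Section Diag.
Variable n : nat.
Variable G : nat -> nat -> R.
Hypothesis HS : symmetric n G.
Notation B := (bform n G).

Lemma subspace_perp L w : subspace n L -> subspace n (fun v => L v /\ B v w = 0).
Proof.
  intros [Hv [H0 [Ha Hs]]]. split; [|split; [|split]].
  - intros v [Lv _]; auto.
  - split; auto. apply bform_zerol.
  - intros v v' [] []. split; auto. rewrite bform_addl. lra.
  - intros t v []. split; auto. rewrite bform_scall. nra.
Qed.

Lemma diag_aux : forall d L, subspace n L -> (exists b, basis L d b) -> exists m b, obasis n G L m b.
Proof.
  intros d. induction d as [d IH] using (well_founded_induction lt_wf).
  intros L HL [b Hb].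
  destruct (classic (forall v, L v -> B v v = 0)) as [Hz|Hnz].
  - exists d, b. split; auto. intros i j Hi Hj _.
    assert (Li : L (b i)) by (apply (proj1 Hb); auto).
    assert (Lj : L (b j)) by (apply (proj1 Hb); auto).
    assert (Lij : L (fun x => b i x + b j x)) by (apply (proj1 (proj2 (proj2 HL))); auto).
    pose proof (Hz _ Lij) as E. rewrite bform_addl, !bform_addr, Hz, Hz in E by auto.
    rewrite (bform_sym n G (b j) (b i) HS) in E. lra.
  - apply not_all_ex_not in Hnz as [w Hw]. apply imply_to_and in Hw as [Lw Hw].
    set (L' := fun v => L v /\ B v w = 0).
    assert (HL' : subspace n L') by (apply subspace_perp; auto).
    destruct (basis_exists n L' HL') as [m' [b' Hb']].
    assert (Hlt : (m' < d)%nat).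
    { assert (Hle : (S m' <= d)%nat).
      { apply (indep_le (S m') d (ext m' b' w) b).
        - intros j Hj. apply (basis_span L d b); auto. unfold ext. destruct (Nat.ltb_spec j m'); auto.
          apply (proj1 (proj1 Hb' j H)).
        - apply (ext_indep n G); auto. apply (basis_indep L'); auto. intros j Hj. apply (proj1 Hb' j Hj). }
      lia. }
    destruct (IH m' Hlt L' HL' (ex_intro _ b' Hb')) as [m'' [b'' [Hb'' Hob'']]].
    exists (S m''), (ext m'' b'' w).
    assert (Lb'' : forall j, (j < m'')%nat -> L' (b'' j)) by (apply (proj1 Hb'')).
    split; [split; [|split]|].
    + intros j Hj. unfold ext. destruct (Nat.ltb_spec j m''); auto. apply Lb''; auto.
    + intros v Lv. set (al := B v w / B w w).
      assert (L'v : L' (fun i => v i - al * w i)).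
      { split.
        replace (fun i => v i - al * w i) with (fun i => v i + (-al) * w i) by (apply functional_extensionality; intros; ring).
        apply (proj1 (proj2 (proj2 HL))); auto. apply (proj2 (proj2 (proj2 HL))); auto.
        rewrite bform_subl, bform_scall. unfold al. field. auto. }
      destruct (basis_span L' m'' b'' _ Hb'' L'v) as [x Hx].
      exists (fun j => if Nat.ltb j m'' then x j else al). intros i.
      rewrite lincomb_extS. rewrite Nat.ltb_irrefl.
      rewrite (lincomb_ext m'' _ x b'' b'') by (intros j Hj; destruct (Nat.ltb_spec j m''); split; auto; lia).
      rewrite <- Hx. ring.
    + apply (ext_indep n G); auto. apply (basis_indep L'); auto. intros j Hj. apply (proj2 (Lb'' j Hj)).
    + intros i j Hi Hj Hne. unfold ext.
      destruct (Nat.ltb_spec i m''); destruct (Nat.ltb_spec j m'').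
      * apply Hob''; auto.
      * apply (proj2 (Lb'' i ltac:(auto))).
      * rewrite bform_sym by auto. apply (proj2 (Lb'' j ltac:(auto))).
      * lia.
Qed.

Lemma diag L : subspace n L -> exists m b, obasis n G L m b.
Proof.
  intros HL. destruct (basis_exists n L HL) as [d [b Hb]]. apply (diag_aux d); eauto.
Qed.

End Diag.

Section Gen.
Variable n : nat.
Variable G : nat -> nat -> R.
Notation B := (bform n G).

Definition cat m (f g : nat -> Vec) : nat -> Vec := fun j => if Nat.ltb j m then f j else g (j - m)%nat.

Lemma npos_app m r F : npos n G (m + r) F = (npos n G m F + npos n G r (fun j => F (m + j)%nat))%nat.
Proof. induction r; simpl. rewrite Nat.add_0_r; lia. rewrite Nat.add_succ_r; simpl. rewrite IHr; lia. Qed.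
Lemma nneg_app m r F : nneg n G (m + r) F = (nneg n G m F + nneg n G r (fun j => F (m + j)%nat))%nat.
Proof. induction r; simpl. rewrite Nat.add_0_r; lia. rewrite Nat.add_succ_r; simpl. rewrite IHr; lia. Qed.

Lemma npos_cat m r f g : npos n G (m + r) (cat m f g) = (npos n G m f + npos n G r g)%nat.
Proof.
  rewrite npos_app. f_equal.
  - apply npos_ext; intros j Hj; unfold cat; destruct (Nat.ltb_spec j m); auto; lia.
  - apply npos_ext; intros j Hj; unfold cat; destruct (Nat.ltb_spec (m+j) m); [lia|]. f_equal; lia.
Qed.
Lemma nneg_cat m r f g : nneg n G (m + r) (cat m f g) = (nneg n G m f + nneg n G r g)%nat.
Proof.
  rewrite nneg_app. f_equal.
  - apply nneg_ext; intros j Hj; unfold cat; destruct (Nat.ltb_spec j m); auto; lia.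
  - apply nneg_ext; intros j Hj; unfold cat; destruct (Nat.ltb_spec (m+j) m); [lia|]. f_equal; lia.
Qed.

Lemma lincomb_cat m r c f g : lincomb (m + r) c (cat m f g) =
  fun i => lincomb m c f i + lincomb r (fun j => c (m + j)%nat) g i.
Proof.
  apply functional_extensionality; intros i. unfold lincomb. rewrite fsum_app. f_equal.
  - apply fsum_ext; intros j Hj; unfold cat; destruct (Nat.ltb_spec j m); auto; lia.
  - apply fsum_ext; intros j Hj; unfold cat; destruct (Nat.ltb_spec (m+j) m); [lia|]. do 3 f_equal; lia.
Qed.

Lemma orthf_cat m r f g : orthf n G m f -> orthf n G r g ->
  (forall i j, (i<m)%nat -> (j<r)%nat -> B (f i) (g j) = 0 /\ B (g j) (f i) = 0) ->
  orthf n G (m + r) (cat m f g).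
Proof.
  intros Hf Hg Hfg i j Hi Hj Hne. unfold cat.
  destruct (Nat.ltb_spec i m); destruct (Nat.ltb_spec j m).
  - apply Hf; auto.
  - apply Hfg; lia.
  - apply Hfg; lia.
  - apply Hg; lia.
Qed.

Lemma npos_all m b : (forall j, (j<m)%nat -> 0 < B (b j) (b j)) -> npos n G m b = m.
Proof. induction m; simpl; intros H; auto. rewrite IHm by (intros; apply H; lia). destruct Rlt_dec; [lia|]. exfalso. apply n0, H; lia. Qed.
Lemma nneg_all m b : (forall j, (j<m)%nat -> 0 < B (b j) (b j)) -> nneg n G m b = 0%nat.
Proof. induction m; simpl; intros H; auto. rewrite IHm by (intros; apply H; lia). destruct Rlt_dec; [|lia]. pose proof (H m ltac:(lia)). lra. Qed.

Lemma npos_exists m b : (1 <= npos n G m b)%nat -> exists j, (j<m)%nat /\ 0 < B (b j) (b j).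
Proof.
  induction m; simpl; intros H; [lia|]. destruct Rlt_dec.
  - exists m; split; auto; lia.
  - rewrite Nat.add_0_r in H. destruct (IHm H) as [j [Hj Hp]]. exists j; split; auto; lia.
Qed.

Lemma npos_zero m b : npos n G m b = 0%nat -> forall j, (j<m)%nat -> ~ 0 < B (b j) (b j).
Proof.
  induction m; simpl; intros H j Hj; [lia|]. destruct Rlt_dec; [lia|].
  destruct (Nat.eq_dec j m) as [->|]; auto. apply IHm; lia.
Qed.

Lemma subspace_orth L : subspace n (orth n G L).
Proof.
  split; [|split; [|split]].
  - intros v [Hv _]; auto.
  - split. intros i _; auto. intros; apply bform_zerol.
  - intros v w [Hv Hv'] [Hw Hw']. split. intros i Hi; rewrite Hv, Hw by auto; ring.
    intros x Lx. rewrite bform_addl, Hv', Hw' by auto; ring.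
  - intros t v [Hv Hv']. split. intros i Hi; rewrite Hv by auto; ring.
    intros x Lx. rewrite bform_scall, Hv' by auto; ring.
Qed.

Lemma subspace_ssum L1 L2 : subspace n L1 -> subspace n L2 -> subspace n (ssum L1 L2).
Proof.
  intros [V1 [Z1 [A1 S1]]] [V2 [Z2 [A2 S2]]]. split; [|split; [|split]].
  - intros v [a [b [Ha [Hb E]]]] i Hi. rewrite E, V1, V2 by auto; ring.
  - exists (fun _ => 0), (fun _ => 0). repeat split; auto. intros; ring.
  - intros v w [a [b [Ha [Hb E]]]] [a' [b' [Ha' [Hb' E']]]].
    exists (fun i => a i + a' i), (fun i => b i + b' i). repeat split; auto. intros i; rewrite E, E'; ring.
  - intros t v [a [b [Ha [Hb E]]]]. exists (fun i => t * a i), (fun i => t * b i). repeat split; auto.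
    intros i; rewrite E; ring.
Qed.

Lemma subspace_sinter L1 L2 : subspace n L1 -> subspace n L2 -> subspace n (sinter L1 L2).
Proof.
  intros [V1 [Z1 [A1 S1]]] [V2 [Z2 [A2 S2]]]. split; [|split; [|split]].
  - intros v [H1 _]; auto.
  - split; auto.
  - intros v w [] []; split; auto.
  - intros t v []; split; auto.
Qed.

Lemma subspace_line z : vec n z -> subspace n (line z).
Proof.
  intros Hz. split; [|split; [|split]].
  - intros v [t E] i Hi. rewrite E, Hz by auto; ring.
  - exists 0; intros; ring.
  - intros v w [t E] [t' E']. exists (t + t'); intros i; rewrite E, E'; ring.
  - intros s v [t E]. exists (s * t); intros i; rewrite E; ring.
Qed.

End Gen.

Definition negG (G : nat -> nat -> R) := fun i j => - G i j.

Lemma bform_neg n G v w : bform n (negG G) v w = - bform n G v w.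
Proof.
  unfold bform, negG. replace (- fsum n _) with ((-1) * fsum n (fun i => fsum n (fun j => G i j * v i * w j))) by ring.
  rewrite <- fsum_scal.
  apply fsum_ext; intros. rewrite <- fsum_scal. apply fsum_ext; intros. ring.
Qed.

Lemma npos_neg n G m b : npos n (negG G) m b = nneg n G m b.
Proof.
  induction m; simpl; auto. rewrite IHm, bform_neg. do 2 destruct Rlt_dec; auto; lra.
Qed.

Lemma orthf_neg n G m u : orthf n G m u -> orthf n (negG G) m u.
Proof. intros H i j Hi Hj Hne. rewrite bform_neg, H; auto; ring. Qed.

Lemma obasis_neg n G L m b : obasis n G L m b -> obasis n (negG G) L m b.
Proof. intros [Hb Ho]. split; auto. apply orthf_neg; auto. Qed.

Lemma K1neg n G L m b s u : subspace n L -> obasis n G L m b -> orthf n G s u -> (forall j, (j<s)%nat -> L (u j)) ->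
  (nneg n G s u <= nneg n G m b)%nat.
Proof.
  intros. rewrite <- !npos_neg. apply (K1 n (negG G) L); auto. apply obasis_neg; auto. apply orthf_neg; auto.
Qed.

Lemma fsum_term_le m f i : (i < m)%nat -> (forall j, (j<m)%nat -> 0 <= f j) -> f i <= fsum m f.
Proof.
  induction m; intros Hi H; [lia|]. simpl. destruct (Nat.eq_dec i m) as [->|].
  - pose proof (fsum_nonneg m f ltac:(intros; apply H; lia)). lra.
  - pose proof (IHm ltac:(lia) ltac:(intros; apply H; lia)). pose proof (H m ltac:(lia)). lra.
Qed.

Lemma open_pos n G y : open_set n (fun x => bform n G y x > 0).
Proof.
  intros v Hv. set (al := bform n G y v) in *.
  set (S := fsum n (fun i => fsum n (fun j => Rabs (G i j * y i)))).
  assert (HS0 : 0 <= S) by (apply fsum_nonneg; intros; apply fsum_nonneg; intros; apply Rabs_pos).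
  exists (al / (S + 1)). split. apply Rlt_gt. apply Rdiv_lt_0_compat; lra.
  intros w Hw Hd. remember (al / (S + 1)) as eps eqn:Heps.
  assert (E : bform n G y w - al = bform n G y (fun i => w i - v i)) by (unfold al; rewrite bform_subr; auto).
  assert (Hb : Rabs (bform n G y (fun i => w i - v i)) <= S * eps).
  { unfold bform. eapply Rle_trans; [apply fsum_abs|]. unfold S. rewrite Rmult_comm, <- fsum_scal.
    apply fsum_le; intros i Hi. eapply Rle_trans; [apply fsum_abs|]. rewrite <- fsum_scal.
    apply fsum_le; intros j Hj. rewrite Rabs_mult. rewrite (Rmult_comm eps). apply Rmult_le_compat_l; [apply Rabs_pos| left; apply Hd; auto]. }
  subst eps. assert (S * (al / (S + 1)) < al).
  { assert (0 < al/(S+1)) by (apply Rdiv_lt_0_compat; lra). replace (S * (al/(S+1))) with (al - al/(S+1)) by (field; lra). lra. }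
  assert (Hr := Rle_abs (- bform n G y (fun i => w i - v i))). rewrite Rabs_Ropp in Hr. lra.
Qed.

Section Star.
Variable n : nat.
Variable D : Vec -> Prop.
Variable c : Vec.
Hypothesis HDv : forall x, D x -> vec n x.
Hypothesis Hc : D c.
Hypothesis Hstar : forall x t, D x -> 0 <= t <= 1 -> D (fun i => t * c i + (1 - t) * x i).

Lemma star_aux U1 U2 x : open_set n U1 -> open_set n U2 -> (forall a, D a -> U1 a \/ U2 a) ->
  (forall a, D a -> U1 a -> U2 a -> False) -> U1 c -> D x -> U2 x -> False.
Proof.
  intros O1 O2 Hcov Hdis Hc1 Dx Hx2.
  set (p := fun t : R => fun i => t * c i + (1 - t) * x i).
  assert (Dp : forall t, 0 <= t <= 1 -> D (p t)) by (intros; apply Hstar; auto).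
  assert (p0 : p 0 = x) by (apply functional_extensionality; intros; unfold p; ring).
  assert (p1 : p 1 = c) by (apply functional_extensionality; intros; unfold p; ring).
  set (K := fsum n (fun i => Rabs (c i - x i)) + 1).
  assert (HK : 0 < K) by (unfold K; pose proof (fsum_nonneg n (fun i => Rabs (c i - x i)) ltac:(intros; apply Rabs_pos)); lra).
  assert (Hcont : forall t s i, (i < n)%nat -> Rabs (p t i - p s i) <= Rabs (t - s) * K).
  { intros t s i Hi. unfold p. replace (t * c i + (1 - t) * x i - (s * c i + (1 - s) * x i)) with ((t - s) * (c i - x i)) by ring.
    rewrite Rabs_mult. apply Rmult_le_compat_l. apply Rabs_pos. unfold K.
    pose proof (fsum_term_le n (fun i => Rabs (c i - x i)) i Hi ltac:(intros; apply Rabs_pos)). simpl in H. lra. }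
  assert (Hnear : forall U s, open_set n U -> 0 <= s <= 1 -> U (p s) -> exists del, del > 0 /\
            forall t, Rabs (t - s) < del -> U (p t)).
  { intros U s OU Hs Us. destruct (OU _ Us) as [eps [He Hw]]. exists (eps / K). split.
    apply Rlt_gt, Rdiv_lt_0_compat; lra.
    intros t Ht. apply Hw. intros i Hi. unfold p. rewrite (HDv c Hc i Hi), (HDv x Dx i Hi). ring.
    intros i Hi. eapply Rle_lt_trans; [apply Hcont; auto|].
    apply Rmult_lt_reg_r with (/ K). apply Rinv_0_lt_compat; lra.
    replace (Rabs (t - s) * K * / K) with (Rabs (t - s)) by (field; lra).
    replace (eps * / K) with (eps / K) by (unfold Rdiv; ring). auto. }
  set (E := fun t => 0 <= t <= 1 /\ forall t', 0 <= t' <= t -> U2 (p t')).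
  assert (Hb : bound E) by (exists 1; intros t [Ht _]; lra).
  assert (He0 : exists t, E t).
  { exists 0. split; [lra|]. intros t' Ht'. replace t' with 0 by lra. rewrite p0; auto. }
  destruct (completeness E Hb He0) as [s [Hub Hlub]].
  assert (Hs0 : 0 <= s) by (apply Hub; split; [lra|]; intros t' Ht'; replace t' with 0 by lra; rewrite p0; auto).
  assert (Hs1 : s <= 1) by (apply Hlub; intros t [Ht _]; lra).
  assert (Hbelow : forall t', 0 <= t' < s -> U2 (p t')).
  { intros t' Ht'. apply NNPP; intro Hn.
    assert (s <= t'); [|lra]. apply Hlub. intros t [Ht Ht2]. destruct (Rle_lt_dec t t'); auto.
    exfalso. apply Hn, Ht2; lra. }
  destruct (Hcov (p s) (Dp s ltac:(lra))) as [Hs|Hs].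
  - destruct (Hnear U1 s O1 ltac:(lra) Hs) as [del [Hd Hdel]].
    destruct (Req_dec s 0) as [->|Hsn].
    + apply (Hdis x Dx); auto. rewrite <- p0; auto.
    + set (t' := Rmax 0 (s - del / 2)).
      assert (Ht' : 0 <= t' < s) by (unfold t'; split; [apply Rmax_l|]; apply Rmax_lub_lt; lra).
      apply (Hdis (p t')). apply Dp; lra. apply Hdel. unfold t'.
      destruct (Rle_dec 0 (s - del/2)); [rewrite Rmax_right by lra|rewrite Rmax_left by lra];
        rewrite Rabs_left1 by lra; lra.
      apply Hbelow; auto.
  - destruct (Req_dec s 1) as [->|Hsn].
    + apply (Hdis c Hc); auto. rewrite <- p1; auto.
    + destruct (Hnear U2 s O2 ltac:(lra) Hs) as [del [Hd Hdel]].
      set (t1 := Rmin 1 (s + del / 2)).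
      assert (Ht1 : s < t1 <= 1) by (unfold t1; split; [apply Rmin_glb_lt; lra|apply Rmin_l]).
      assert (E t1).
      { split; [lra|]. intros t' Ht'. destruct (Rlt_le_dec t' s).
        - apply Hbelow; lra.
        - apply Hdel. assert (t1 <= s + del/2) by (unfold t1; apply Rmin_r).
          rewrite Rabs_right by lra. lra. }
      pose proof (Hub t1 H). lra.
Qed.

Lemma star_conn : connected n D.
Proof.
  intros [U1 [U2 [O1 [O2 [Hcov [[a1 [Da1 Ha1]] [[a2 [Da2 Ha2]] Hdis]]]]]]].
  destruct (Hcov c Hc) as [Hc1|Hc2].
  - apply (star_aux U1 U2 a2); auto.
  - apply (star_aux U2 U1 a1); auto. intros a Da; destruct (Hcov a Da); auto.
    intros a Da H1 H2; apply (Hdis a); auto.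
Qed.

End Star.

Lemma h_exists n G H r hb : symmetric n G -> subspace n H -> basis H r hb ->
  (forall v, H v -> nonzero v -> bform n G v v > 0) ->
  exists h, obasis n G H r h /\ forall j, (j<r)%nat -> 0 < bform n G (h j) (h j).
Proof.
  intros HS HH Hhb Hpd. destruct (diag n G HS H HH) as [dh [h [Hh Hoh]]].
  assert (Hp : forall j, (j<dh)%nat -> 0 < bform n G (h j) (h j)).
  { intros j Hj. apply Hpd. apply (proj1 Hh); auto. apply (indep_nonzero dh); auto. apply (basis_indep H); auto. }
  assert (E : dh = r).
  { apply Nat.le_antisymm.
    - apply (indep_le dh r h hb). intros j Hj. apply (basis_span H); auto. apply (proj1 Hh); auto.
      apply (basis_indep H); auto.
    - apply (indep_le r dh hb h). intros j Hj. apply (basis_span H); auto. apply (proj1 Hhb); auto.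
      apply (basis_indep H); auto. }
  subst. exists h. split; auto. split; auto.
Qed.

Section Main1.
Variables (n k l : nat) (G : nat -> nat -> R) (H : Vec -> Prop).
Notation B := (bform n G).
Hypothesis HS : symmetric n G.
Hypothesis HN : nondegenerate n G.
Variables (me : nat) (e : nat -> Vec).
Hypothesis He : obasis n G (whole n) me e.
Hypothesis Hpe : npos n G me e = k.
Hypothesis Hne : nneg n G me e = l.
Hypothesis Hk : (1 <= k)%nat.
Hypothesis HH : subspace n H.
Hypothesis Hpd : forall v, H v -> nonzero v -> B v v > 0.
Variable h : nat -> Vec.
Hypothesis Hh : obasis n G H (k-1) h.
Hypothesis Hhp : forall j, (j < k-1)%nat -> 0 < B (h j) (h j).

Notation M := (orth n G H).

Definition projH (v : Vec) : Vec := lincomb (k-1) (fun i => B v (h i) / B (h i) (h i)) h.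

Lemma projH_in v : H (projH v).
Proof. unfold projH. apply (lincomb_in n); auto. apply (proj1 (proj1 Hh)). Qed.

Lemma vecH v : H v -> vec n v.
Proof. apply (proj1 HH). Qed.

Lemma HM_orth a u : H a -> M u -> B u a = 0 /\ B a u = 0.
Proof. intros Ha [Hu Hu']. split. apply Hu'; auto. rewrite bform_sym by auto. apply Hu'; auto. Qed.

Lemma orthH_of_h v : vec n v -> (forall i, (i < k-1)%nat -> B v (h i) = 0) -> M v.
Proof.
  intros Hv Ho. split; auto. intros x Hx. destruct (basis_span H (k-1) h x (proj1 Hh) Hx) as [y ->].
  rewrite bform_lcr. apply fsum_zero. intros i Hi. rewrite Ho by auto. ring.
Qed.

Lemma perpM v : vec n v -> M (fun i => v i - projH v i).
Proof.
  intros Hv. apply orthH_of_h.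
  - intros i Hi. rewrite Hv by auto. rewrite (vecH _ (projH_in v)) by auto. ring.
  - intros i Hi. rewrite bform_subl. unfold projH. rewrite (coord_l n G (k-1) _ h i (proj2 Hh) Hi).
    field. pose proof (Hhp i Hi). lra.
Qed.

Lemma decomp v : v = fun i => projH v i + (v i - projH v i).
Proof. apply functional_extensionality; intros; ring. Qed.

Lemma ND x : M x -> (forall y, M y -> B x y = 0) -> forall i, x i = 0.
Proof.
  intros Mx Hx. assert (Hnz : ~ nonzero x).
  { apply HN. apply (proj1 Mx). intros w Hw. rewrite (decomp w), bform_addr.
    rewrite (proj1 (HM_orth _ _ (projH_in w) Mx)). rewrite Hx by (apply perpM; auto). ring. }
  intros i. apply NNPP; intro; apply Hnz; exists i; auto.
Qed.

Lemma sigM : exists d b, obasis n G M d b /\ npos n G d b = 1%nat /\ nneg n G d b = l /\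
   (forall j, (j < d)%nat -> B (b j) (b j) <> 0).
Proof.
  destruct (diag n G HS M (subspace_orth n G H)) as [d [b Hb]].
  assert (Hnz : forall j, (j < d)%nat -> B (b j) (b j) <> 0).
  { intros j Hj E. destruct (indep_nonzero d b j (basis_indep _ _ _ (proj1 Hb)) Hj) as [i0 Hi0].
    apply Hi0. clear Hi0. revert i0. apply ND. apply (proj1 (proj1 Hb)); auto.
    intros y My. destruct (basis_span M d b y (proj1 Hb) My) as [x ->].
    rewrite (coord_r n G d x b j (proj2 Hb) Hj). rewrite E; ring. }
  set (F := cat (k-1) h b).
  assert (HoF : orthf n G (k - 1 + d) F).
  { apply orthf_cat. exact (proj2 Hh). exact (proj2 Hb).
    intros i j Hi Hj. pose proof (HM_orth (h i) (b j)) as Hx. destruct Hx; auto.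
    apply (proj1 (proj1 Hh)); auto. apply (proj1 (proj1 Hb)); auto. }
  assert (HbF : obasis n G (whole n) (k - 1 + d) F).
  { split; auto. split; [|split].
    - intros j Hj. unfold F, cat, whole. destruct (Nat.ltb_spec j (k-1)).
      apply vecH, (proj1 (proj1 Hh)); auto. apply (proj1 (proj1 Hb)); lia.
    - intros v Hv. destruct (basis_span M d b _ (proj1 Hb) (perpM v Hv)) as [y Hy].
      exists (fun j => if Nat.ltb j (k-1) then B v (h j) / B (h j) (h j) else y (j - (k-1))%nat).
      intros i. unfold F. rewrite lincomb_cat.
      assert (Hyi : v i - projH v i = lincomb d y b i) by (rewrite <- Hy; reflexivity).
      transitivity (projH v i + (v i - projH v i)); [ring|]. rewrite Hyi. unfold projH.
      rewrite (lincomb_ext (k-1) (fun j => if Nat.ltb j (k-1) then _ else _) (fun i => B v (h i) / B (h i) (h i)) h h)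
        by (intros j Hj; destruct (Nat.ltb_spec j (k-1)); split; auto; lia).
      rewrite (lincomb_ext d (fun j => if Nat.ltb (k - 1 + j) (k-1) then _ else _) y b b)
        by (intros j Hj; destruct (Nat.ltb_spec (k-1+j) (k-1)); [lia|]; split; auto; f_equal; lia).
      reflexivity.
    - apply (orth_indep n G (k-1+d) F); auto. intros j Hj. unfold F, cat. destruct (Nat.ltb_spec j (k-1)).
      pose proof (Hhp j ltac:(auto)). lra. apply Hnz. lia. }
  assert (Hp : npos n G (k - 1 + d) F = (k - 1 + npos n G d b)%nat).
  { unfold F. rewrite npos_cat. rewrite npos_all; auto. }
  assert (Hq : nneg n G (k - 1 + d) F = nneg n G d b).
  { unfold F. rewrite nneg_cat. rewrite nneg_all; auto. }
  assert (Hw : forall j, (j < k-1+d)%nat -> whole n (F j)) by (apply (proj1 (proj1 HbF))).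
  assert (He' : forall j, (j < me)%nat -> whole n (e j)) by (apply (proj1 (proj1 He))).
  pose proof (K1 n G (whole n) me e (k-1+d) F (subspace_whole n) He HoF Hw).
  pose proof (K1 n G (whole n) (k-1+d) F me e (subspace_whole n) HbF (proj2 He) He').
  pose proof (K1neg n G (whole n) me e (k-1+d) F (subspace_whole n) He HoF Hw).
  pose proof (K1neg n G (whole n) (k-1+d) F me e (subspace_whole n) HbF (proj2 He) He').
  exists d, b. split; auto. split; [lia|]. split; [lia|]. auto.
Qed.


Variable Z : Vec -> Prop.
Hypothesis HZ : subspace n Z.
Variables (d : nat) (b : nat -> Vec).
Hypothesis Hb : obasis n G M d b.
Hypothesis Hb1 : npos n G d b = 1%nat.

Notation W := (sinter (ssum H Z) M).
Definition PosW := exists w0, W w0 /\ B w0 w0 > 0.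

Lemma subM : subspace n M.
Proof. apply subspace_orth. Qed.

Lemma M_lin v w t : M v -> M w -> M (fun i => v i + t * w i).
Proof. intros Hv Hw. destruct subM as [_ [_ [Ha Hs]]]. apply Ha; auto. Qed.

Lemma Mfam_le s u : orthf n G s u -> (forall j, (j<s)%nat -> M (u j)) -> (npos n G s u <= 1)%nat.
Proof. intros Ho Hu. rewrite <- Hb1. apply (K1 n G M d b s u subM Hb Ho Hu). Qed.

Lemma Neg1 w0 v : M w0 -> B w0 w0 > 0 -> M v -> B v w0 = 0 -> ~ B v v > 0.
Proof.
  intros Mw Hw Mv Hvw Hv.
  set (fam := ext 1 (fun _ => w0) v).
  assert (Ho : orthf n G 2 fam).
  { intros i j Hi Hj Hij. unfold fam, ext.
    destruct (Nat.ltb_spec i 1); destruct (Nat.ltb_spec j 1); try lia.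
    - rewrite bform_sym; auto.
    - auto. }
  assert (Hu : forall j, (j<2)%nat -> M (fam j)) by (intros j Hj; unfold fam, ext; destruct (Nat.ltb_spec j 1); auto).
  pose proof (Mfam_le 2 fam Ho Hu) as Hle. unfold fam in Hle. simpl in Hle. unfold ext in Hle. simpl in Hle.
  destruct Rlt_dec; [|lra]. destruct Rlt_dec; [|lra]. lia.
Qed.

Lemma Neg w0 u : M w0 -> B w0 w0 > 0 -> M u -> B u w0 = 0 -> nonzero u -> B u u < 0.
Proof.
  intros Mw Hw Mu Huw Hnz. destruct (Rlt_le_dec (B u u) 0) as [|Hge]; auto. exfalso.
  destruct Hge as [Hgt|Heq]. { apply (Neg1 w0 u); auto. }
  assert (Hy : exists y, M y /\ B u y <> 0).
  { apply NNPP; intro Hn. destruct Hnz as [i Hi]. apply Hi. clear Hi. revert i. apply ND; auto.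
    intros y My. apply NNPP; intro; apply Hn; exists y; auto. }
  destruct Hy as [y [My Hy]].
  set (al := B y w0 / B w0 w0).
  set (y' := fun i => y i + (- al) * w0 i).
  assert (My' : M y') by (apply M_lin; auto).
  assert (Huy' : B u y' = B u y) by (unfold y'; rewrite bform_addr, bform_scalr, Huw; ring).
  assert (Hy'w : B y' w0 = 0) by (unfold y'; rewrite bform_addl, bform_scall; unfold al; field; lra).
  set (a := B u y') in *. set (c := B y' y').
  set (t := a / (Rabs c + 1)).
  assert (Hs : 0 < Rabs c + 1) by (pose proof (Rabs_pos c); lra).
  assert (Ht : t * (Rabs c + 1) = a) by (unfold t; field; lra).
  assert (Ht0 : t <> 0) by (intro E; rewrite E in Ht; lra).
  set (v := fun i => u i + t * y' i).
  apply (Neg1 w0 v); auto.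
  - apply M_lin; auto.
  - unfold v. rewrite bform_addl, bform_scall, Huw, Hy'w. ring.
  - unfold v. rewrite bform_addl, !bform_addr, !bform_scall, !bform_scalr.
    rewrite (bform_sym n G y' u) by auto. fold a c. rewrite <- Heq.
    replace (0 + t * a + (t * a + t * (t * c))) with (t * t * (2 * (Rabs c + 1) + c)) by (rewrite <- Ht; ring).
    assert (0 < t * t) by (pose proof (Rsqr_pos_lt t Ht0); unfold Rsqr in *; lra).
    assert (0 < 2 * (Rabs c + 1) + c) by (pose proof (Rle_abs (- c)); rewrite Rabs_Ropp in *; lra).
    apply Rlt_gt. apply Rmult_lt_0_compat; auto.
Qed.

Lemma PosW_iii : PosW -> exists p, qplus n G W p /\ (1 <= p)%nat.
Proof.
  intros [w0 [Ww0 Hw0]].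
  assert (HW : subspace n W) by (apply subspace_sinter; [apply subspace_ssum; auto|apply subM]).
  destruct (diag n G HS W HW) as [m [f Hf]]. exists (npos n G m f). split. exists m, f; auto.
  destruct (le_lt_dec 1 (npos n G m f)) as [|Hz]; auto. exfalso.
  assert (Hz0 : npos n G m f = 0%nat) by lia.
  destruct (basis_span W m f w0 (proj1 Hf) Ww0) as [x Hx].
  rewrite Hx, expand in Hw0 by (exact (proj2 Hf)).
  assert (fsum m (fun i => x i * x i * B (f i) (f i)) <= 0); [|lra].
  apply fsum_nonpos; intros i Hi. pose proof (npos_zero n G m f Hz0 i Hi).
  pose proof (Rle_0_sqr (x i)). unfold Rsqr in *. nra.
Qed.

Lemma iii_PosW : (exists p, qplus n G W p /\ (1 <= p)%nat) -> PosW.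
Proof.
  intros [p [[m [f [Hf Hp]]] H1]]. subst p.
  destruct (npos_exists n G m f H1) as [j [Hj Hpj]]. exists (f j). split; auto.
  apply (proj1 (proj1 Hf)); auto.
Qed.

Lemma fam_PosW s u : orthf n G s u -> (forall j, (j<s)%nat -> ssum H Z (u j)) -> (k <= npos n G s u)%nat -> PosW.
Proof.
  intros Ho Hu Hk'.
  destruct (K0 n G s u (k-1) h (fun _ => true) Ho) as [c [Hp Hz]].
  { rewrite cnt_true. lia. }
  exists (lincomb s c u). split; auto. split.
  - apply (lincomb_in n); auto. apply subspace_ssum; auto.
  - apply orthH_of_h. apply (vec_lincomb n). intros j Hj. apply (proj1 (subspace_ssum n H Z HH HZ)); auto.
    intros i Hi. apply Hz; auto.
Qed.

Lemma ii_PosW : qplus n G (ssum H Z) k -> PosW.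
Proof.
  intros [m [f [Hf Hp]]]. apply (fam_PosW m f); auto. exact (proj2 Hf). apply (proj1 (proj1 Hf)). lia.
Qed.

Lemma orthf_ext m f w : orthf n G m f -> (forall j, (j<m)%nat -> B (f j) w = 0 /\ B w (f j) = 0) ->
  orthf n G (S m) (ext m f w).
Proof.
  intros Hf Hw i j Hi Hj Hij. unfold ext.
  destruct (Nat.ltb_spec i m); destruct (Nat.ltb_spec j m).
  - apply Hf; auto.
  - apply Hw; auto.
  - apply Hw; auto.
  - lia.
Qed.

Lemma PP s u c : orthf n G s u -> (forall j, (j<s)%nat -> 0 < B (u j) (u j)) -> nonzero (lincomb s c u) ->
  B (lincomb s c u) (lincomb s c u) > 0.
Proof.
  intros Ho Hp Hnz. rewrite expand by exact Ho.
  destruct (classic (exists j, (j<s)%nat /\ c j <> 0)) as [[j [Hj Hc]]|Hno].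
  - apply Rlt_gt. apply (fsum_pos s _ j Hj).
    + intros i Hi. pose proof (Hp i Hi). pose proof (Rle_0_sqr (c i)). unfold Rsqr in *. nra.
    + pose proof (Hp j Hj). pose proof (Rsqr_pos_lt (c j) Hc). unfold Rsqr in *. nra.
  - exfalso. destruct Hnz as [i Hi]. apply Hi. unfold lincomb. apply fsum_zero. intros j Hj.
    replace (c j) with 0. ring. apply NNPP; intro; apply Hno; exists j; auto.
Qed.

Lemma hw0_fam w0 : M w0 -> B w0 w0 > 0 ->
  orthf n G (S (k-1)) (ext (k-1) h w0) /\ (forall j, (j < S (k-1))%nat -> 0 < B (ext (k-1) h w0 j) (ext (k-1) h w0 j)).
Proof.
  intros Mw Hw. split.
  - apply orthf_ext. exact (proj2 Hh). intros j Hj. destruct (HM_orth (h j) w0) as [A1 A2]; auto.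
    apply (proj1 (proj1 Hh)); auto.
  - intros j Hj. unfold ext. destruct (Nat.ltb_spec j (k-1)); auto.
Qed.

Lemma PosW_ii : PosW -> qplus n G (ssum H Z) k.
Proof.
  intros [w0 [[Sw0 Mw0] Hw0]].
  assert (HS' : subspace n (ssum H Z)) by (apply subspace_ssum; auto).
  destruct (diag n G HS _ HS') as [m [f Hf]]. exists m, f. split; auto.
  apply Nat.le_antisymm.
  - rewrite <- Hpe. apply (K1 n G (whole n) me e m f (subspace_whole n) He (proj2 Hf)).
    intros j Hj. apply (proj1 HS'). apply (proj1 (proj1 Hf)); auto.
  - destruct (hw0_fam w0 Mw0 Hw0) as [HoF HpF].
    assert (Hp : npos n G (S (k-1)) (ext (k-1) h w0) = k).
    { rewrite npos_extS, npos_all by auto. destruct Rlt_dec; [lia|lra]. }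
    rewrite <- Hp. apply (K1 n G _ m f _ _ HS' Hf HoF).
    intros j Hj. unfold ext. destruct (Nat.ltb_spec j (k-1)); auto.
    exists (h j), (fun _ => 0). split. apply (proj1 (proj1 Hh)); auto. split. apply (proj1 (proj2 HZ)). intros; ring.
Qed.

Lemma i_PosW : extendable n G k Z H -> PosW.
Proof.
  intros [z [Zz [HP [[pb Hpb] Hpd']]]].
  destruct (diag n G HS _ HP) as [s [q Hq]].
  assert (Hqp : forall j, (j<s)%nat -> 0 < B (q j) (q j)).
  { intros j Hj. apply Hpd'. apply (proj1 (proj1 Hq)); auto. apply (indep_nonzero s); auto.
    apply (basis_indep _ _ _ (proj1 Hq)). }
  assert (Hks : (k <= s)%nat).
  { apply (indep_le k s pb q). intros j Hj. apply (basis_span (ssum H (line z)) s q); auto. exact (proj1 Hq).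
    apply (proj1 Hpb); auto. apply (basis_indep _ _ _ Hpb). }
  apply (fam_PosW s q). exact (proj2 Hq).
  - intros j Hj. destruct (proj1 (proj1 Hq) j Hj) as [a [v [Ha [[t Ht] E]]]].
    exists a, (fun i => t * z i). split; auto. split. apply (proj2 (proj2 (proj2 HZ))); auto.
    intros i; rewrite E, Ht; auto.
  - rewrite npos_all; auto.
Qed.

Lemma PosW_i : PosW -> extendable n G k Z H.
Proof.
  intros [w0 [[[a [z [Ha [Zz E]]]] Mw0] Hw0]].
  exists z. split; auto.
  assert (Hvz : vec n z) by (apply (proj1 HZ); auto).
  assert (HP : subspace n (ssum H (line z))) by (apply subspace_ssum; auto; apply subspace_line; auto).
  destruct (hw0_fam w0 Mw0 Hw0) as [HoF HpF].
  set (F := ext (k-1) h w0) in *.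
  assert (HFin : forall j, (j < S (k-1))%nat -> ssum H (line z) (F j)).
  { intros j Hj. unfold F, ext. destruct (Nat.ltb_spec j (k-1)).
    - exists (h j), (fun _ => 0). split. apply (proj1 (proj1 Hh)); auto. split. exists 0; intros; ring. intros; ring.
    - exists a, z. split; auto. split. exists 1; intros; ring. auto. }
  assert (Hbasis : basis (ssum H (line z)) (S (k-1)) F).
  { split; [auto|split].
    - intros v [a' [bz [Ha' [[t Ht] Ev]]]].
      assert (Hx : H (fun i => a' i + (- t) * a i)).
      { destruct HH as [_ [_ [Ad Sc]]]. apply Ad; auto. }
      destruct (basis_span H (k-1) h _ (proj1 Hh) Hx) as [y Hy].
      exists (fun j => if Nat.ltb j (k-1) then y j else t). intros i. unfold F.
      rewrite lincomb_extS, Nat.ltb_irrefl.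
      rewrite (lincomb_ext (k-1) _ y h h) by (intros j Hj; destruct (Nat.ltb_spec j (k-1)); split; auto; lia).
      rewrite <- Hy. rewrite Ev, Ht, E. ring.
    - apply (orth_indep n G); auto. intros j Hj. pose proof (HpF j Hj). lra. }
  assert (Ek : S (k-1) = k) by lia. rewrite <- Ek.
  split; auto. split. exists F; auto.
  intros v Pv Hnz. destruct (basis_span _ _ F v Hbasis Pv) as [c Hc]. subst v.
  apply PP; auto.
Qed.

Lemma PosW_iv C : connected n C -> (forall u, C u -> causal_cone n G M u) -> PosW ->
   exists z, Z z /\ forall u, C u -> B z u > 0.
Proof.
  intros Hc HC [w0 [[[a [z [Ha [Zz E]]]] Mw0] Hw0]].
  assert (Hnz : forall u, C u -> B w0 u <> 0).
  { intros u Cu E0. destruct (HC u Cu) as [Mu [Hge Hnzu]].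
    assert (B u w0 = 0) by (rewrite bform_sym; auto).
    pose proof (Neg w0 u Mw0 Hw0 Mu H0 Hnzu). lra. }
  assert (Hzu : forall u, C u -> B z u = B w0 u).
  { intros u Cu. replace w0 with (fun i => a i + z i) by (apply functional_extensionality; auto).
    rewrite bform_addl. destruct (HM_orth a u Ha (proj1 (HC u Cu))) as [_ ->]. ring. }
  destruct (classic (exists u, C u /\ B w0 u < 0)) as [[u2 [Cu2 H2]]|Hno].
  - destruct (classic (exists u, C u /\ B w0 u > 0)) as [[u1 [Cu1 H1]]|Hno1].
    + exfalso. apply Hc. exists (fun x => B w0 x > 0), (fun x => B (fun i => - w0 i) x > 0).
      split. apply open_pos. split. apply open_pos. split.
      * intros x Cx. rewrite bform_oppl. destruct (Rtotal_order (B w0 x) 0) as [|[|]];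
          [right; lra|exfalso; apply (Hnz x); auto|left; lra].
      * split. exists u1; auto. split. exists u2; split; auto. rewrite bform_oppl; lra.
        intros x Cx H1' H2'. rewrite bform_oppl in H2'. lra.
    + exists (fun i => -1 * z i). split. apply (proj2 (proj2 (proj2 HZ))); auto.
      intros u Cu. rewrite bform_scall, Hzu by auto. destruct (Rtotal_order (B w0 u) 0) as [|[|]];
        [lra|exfalso; apply (Hnz u); auto|exfalso; apply Hno1; exists u; split; auto].
  - exists z. split; auto. intros u Cu. rewrite Hzu by auto. destruct (Rtotal_order (B w0 u) 0) as [|[|]];
      [exfalso; apply Hno; exists u; auto|exfalso; apply (Hnz u); auto|lra].
Qed.

Lemma iv_v C : (exists z, Z z /\ forall u, C u -> B z u > 0) -> ~ exists u, orth n G Z u /\ C u.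
Proof.
  intros [z [Zz Hz]] [u [[_ Hu] Cu]]. pose proof (Hz u Cu) as Hp. rewrite bform_sym in Hp by auto.
  rewrite Hu in Hp by auto. lra.
Qed.

Lemma Fconn e1 : M e1 -> B e1 e1 > 0 -> connected n (fun x => causal_cone n G M x /\ B e1 x > 0).
Proof.
  intros Me He1. apply (star_conn n _ e1).
  - intros x [[Mx _] _]. apply (proj1 Mx).
  - split; [split; [auto|split]|]; auto. lra. apply (nonzero_of_form n G). lra.
  - intros x t [[Mx [Hxx Hnx]] Hex] Ht.
    assert (My : M (fun i => t * e1 i + (1 - t) * x i)).
    { destruct subM as [_ [_ [Ad Sc]]]. apply Ad; apply Sc; auto. }
    assert (Exy : B (fun i => t * e1 i + (1 - t) * x i) (fun i => t * e1 i + (1 - t) * x i) =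
                  t * t * B e1 e1 + 2 * t * (1 - t) * B e1 x + (1 - t) * (1 - t) * B x x).
    { rewrite bform_addl, !bform_addr, !bform_scall, !bform_scalr. rewrite (bform_sym n G x e1) by auto. ring. }
    assert (Hey : B e1 (fun i => t * e1 i + (1 - t) * x i) = t * B e1 e1 + (1 - t) * B e1 x).
    { rewrite bform_addr, !bform_scalr. ring. }
    assert (0 <= t * (1 - t)) by nra.
    assert (0 <= (1 - t) * (1 - t)) by nra.
    split; [split; [auto|split]|].
    + rewrite Exy. assert (0 <= t * t) by nra. nra.
    + destruct (Req_dec t 0) as [->|Ht0].
      * replace (fun i => 0 * e1 i + (1 - 0) * x i) with x; auto.
        apply functional_extensionality; intros; ring.
      * apply (nonzero_of_form n G). rewrite Exy. assert (0 < t * t) by nra. nra.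
    + rewrite Hey. destruct (Req_dec t 0) as [->|Ht0]; nra.
Qed.

Lemma v_PosW C : connected_component n C (causal_cone n G M) -> ~ (exists u, orth n G Z u /\ C u) -> PosW.
Proof.
  intros [HCA [[x0 Cx0] [Hconn Hmax]]] Hv. apply NNPP; intro HnP.
  destruct (npos_exists n G d b ltac:(lia)) as [j1 [Hj1 He1]].
  set (e1 := b j1). fold e1 in He1.
  assert (Me1 : M e1) by (apply (proj1 (proj1 Hb)); auto).
  assert (HW : subspace n W) by (apply subspace_sinter; [apply subspace_ssum; auto|apply subM]).
  assert (Hu : exists u, M u /\ B u u >= 0 /\ nonzero u /\ forall x, W x -> B u x = 0).
  { destruct (diag n G HS W HW) as [s [w [Hw Hwo]]].
    assert (Ww : forall i, (i<s)%nat -> W (w i)) by (apply (proj1 Hw)).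
    destruct (classic (exists i, (i<s)%nat /\ B (w i) (w i) = 0)) as [[i [Hi Hi0]]|Hno].
    - exists (w i). split. apply (Ww i Hi). split. lra. split.
      apply (indep_nonzero s); auto. apply (basis_indep W); auto.
      intros x Wx. destruct (basis_span W s w x Hw Wx) as [y ->].
      rewrite (coord_r n G s y w i Hwo Hi), Hi0. ring.
    - assert (Hneg : forall i, (i<s)%nat -> B (w i) (w i) < 0).
      { intros i Hi. destruct (Rtotal_order (B (w i) (w i)) 0) as [|[|]]; auto.
        exfalso; apply Hno; exists i; auto. exfalso; apply HnP; exists (w i); auto. }
      set (al := fun i => B e1 (w i) / B (w i) (w i)).
      set (v' := fun t => e1 t + (-1) * lincomb s al w t).
      assert (Mv' : M v').
      { apply M_lin; auto. apply (lincomb_in n); auto. apply subM. intros i Hi; apply (Ww i Hi). }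
      assert (Hp : forall i, (i<s)%nat -> B v' (w i) = 0).
      { intros i Hi. unfold v'. rewrite bform_addl, bform_scall, (coord_l n G s al w i Hwo Hi).
        unfold al. field. pose proof (Hneg i Hi). lra. }
      assert (Hperp : forall x, W x -> B v' x = 0).
      { intros x Wx. destruct (basis_span W s w x Hw Wx) as [y ->]. rewrite bform_lcr.
        apply fsum_zero. intros i Hi. rewrite Hp by auto. ring. }
      assert (Hvv : B v' v' >= B e1 e1).
      { assert (E1 : B v' v' = B e1 v') by (unfold v' at 1; rewrite bform_addl, bform_scall;
          rewrite (bform_sym n G (lincomb s al w) v') by auto; rewrite Hperp; [ring|];
          apply (lincomb_in n); auto; intros i Hi; apply (Ww i Hi)).
        rewrite E1. unfold v'. rewrite bform_addr, bform_scalr, bform_lcr.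
        assert (fsum s (fun j => al j * B e1 (w j)) <= 0); [|lra].
        apply fsum_nonpos. intros i Hi. unfold al. pose proof (Hneg i Hi).
        replace (B e1 (w i) / B (w i) (w i) * B e1 (w i)) with (- (B e1 (w i) * B e1 (w i)) * / (- B (w i) (w i))) by (field; lra).
        assert (0 < / (- B (w i) (w i))) by (apply Rinv_0_lt_compat; lra).
        pose proof (Rle_0_sqr (B e1 (w i))). unfold Rsqr in *. nra. }
      exists v'. split; auto. split. lra. split. apply (nonzero_of_form n G). lra. auto. }
  destruct Hu as [u [Mu [Huu [Hnzu Hperp]]]].
  assert (Zperp : forall t, orth n G Z (fun i => t * u i)).
  { intros t. split. intros i Hi. rewrite (proj1 Mu) by auto. ring. intros z Zz.
    assert (Hvz : vec n z) by (apply (proj1 HZ); auto).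
    assert (Wz : W (fun i => z i - projH z i)).
    { split. exists (fun i => -1 * projH z i), z. split. apply (proj2 (proj2 (proj2 HH))). apply projH_in.
      split; auto. intros; ring. apply perpM; auto. }
    rewrite bform_scall. rewrite (decomp z), bform_addr. rewrite (Hperp _ Wz).
    destruct (HM_orth (projH z) u (projH_in z) Mu) as [-> _]. ring. }
  assert (Hcone : forall x, causal_cone n G M x -> B e1 x <> 0).
  { intros x [Mx [Hxx Hnx]] E0. assert (B x e1 = 0) by (rewrite bform_sym; auto).
    pose proof (Neg e1 x Me1 He1 Mx H0 Hnx). lra. }
  assert (Hor : exists e', M e' /\ B e' e' > 0 /\ B e' x0 > 0 /\ forall x, causal_cone n G M x -> B e' x <> 0).
  { destruct (Rtotal_order (B e1 x0) 0) as [Hl|[Hq|Hg]].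
    - exists (fun i => -1 * e1 i). split. destruct subM as [_ [_ [_ Sc]]]. apply Sc; auto.
      rewrite bform_scall, bform_scalr. split. lra. rewrite bform_scall. split. lra.
      intros x Hx. rewrite bform_scall. pose proof (Hcone x Hx). intro; apply H0; lra.
    - exfalso. apply (Hcone x0); auto.
    - exists e1. auto. }
  destruct Hor as [e' [Me' [He' [Hx0 Hc']]]].
  assert (Fsub : forall x, causal_cone n G M x /\ B e' x > 0 -> C x).
  { apply Hmax. intros x [Hx _]; auto. apply Fconn; auto. exists x0. split; [split; [apply HCA; auto|auto]|auto]. }
  assert (Cu : causal_cone n G M u) by (split; auto).
  destruct (Rtotal_order (B e' u) 0) as [Hl|[Hq|Hg]].
  - apply Hv. exists (fun i => -1 * u i). split. apply Zperp. apply Fsub.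
    split. split. destruct subM as [_ [_ [_ Sc]]]. apply Sc; auto. split.
    rewrite bform_scall, bform_scalr. lra. destruct Hnzu as [i Hi]. exists i. lra.
    rewrite bform_scalr. lra.
  - exfalso. apply (Hc' u Cu Hq).
  - apply Hv. exists u. split. replace u with (fun i => 1 * u i) by (apply functional_extensionality; intros; ring).
    apply Zperp. apply Fsub. split; auto.
Qed.

Lemma main_eqs C : connected_component n C (causal_cone n G M) ->
    (extendable n G k Z H <-> qplus n G (ssum H Z) k) /\
    (qplus n G (ssum H Z) k <->
       exists p, qplus n G (sinter (ssum H Z) (orth n G H)) p /\ (1 <= p)%nat) /\
    ((exists p, qplus n G (sinter (ssum H Z) (orth n G H)) p /\ (1 <= p)%nat) <->
       exists z, Z z /\ forall u, C u -> bform n G z u > 0) /\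
    ((exists z, Z z /\ forall u, C u -> bform n G z u > 0) <->
       ~ exists u, orth n G Z u /\ C u).
Proof.
  intros HC. pose proof HC as [HCA [_ [Hconn _]]].
  split; [split|split; [split|split; split]]; intro X.
  - apply PosW_ii, i_PosW; auto.
  - apply PosW_i, ii_PosW; auto.
  - apply PosW_iii, ii_PosW; auto.
  - apply PosW_ii, iii_PosW; auto.
  - apply (PosW_iv C Hconn HCA), iii_PosW; auto.
  - apply PosW_iii, (v_PosW C HC), (iv_v C); auto.
  - apply iv_v; auto.
  - apply (PosW_iv C Hconn HCA), (v_PosW C HC); auto.
Qed.

End Main1.

Theorem lemma2 (n k l : nat) (G : nat -> nat -> R) (Z H : Vec -> Prop) :
  pseudo_euclidean n G k l ->
  (2 <= k)%nat -> (2 <= l)%nat ->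
  subspace n Z -> (exists p, qplus n G Z p /\ (1 <= p)%nat) ->
  pos_plane n G H (k - 1) ->
  signature n G (orth n G H) 1 l /\
  forall C : Vec -> Prop,
    connected_component n C (causal_cone n G (orth n G H)) ->
    (extendable n G k Z H <-> qplus n G (ssum H Z) k) /\
    (qplus n G (ssum H Z) k <->
       exists p, qplus n G (sinter (ssum H Z) (orth n G H)) p /\ (1 <= p)%nat) /\
    ((exists p, qplus n G (sinter (ssum H Z) (orth n G H)) p /\ (1 <= p)%nat) <->
       exists z, Z z /\ forall u, C u -> bform n G z u > 0) /\
    ((exists z, Z z /\ forall u, C u -> bform n G z u > 0) <->
       ~ exists u, orth n G Z u /\ C u).
Proof.
  intros [HS [HN [me [e [He [Hpe [Hne _]]]]]]] Hk Hl HZ _ [HH [[hb Hhb] Hpd]].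
  destruct (h_exists n G H (k-1) hb HS HH Hhb Hpd) as [h [Hh Hhp]].
  assert (Hk1 : (1 <= k)%nat) by lia.
  destruct (sigM n k l G H HS HN me e He Hpe Hne Hk1 HH h Hh Hhp) as [d [b [Hb [Hb1 [Hbl Hbz]]]]].
  split.
  - exists d, b. auto.
  - intros C HC. eapply main_eqs; eauto.
Qed.
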